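(* Let $k,n$ be positive integers with $k\leqslant n$ and let $X\subseteq[n]^k_<$ be either an order ideal or an interval of $[n]^k_<$ in the Bruhat order. If $L$ is a linear extension of $X$, then $\partial_D L=\partial_H L$.
   Context: $[n]:=\{1,\ldots,n\}$; $[n]^k_<$ denotes the set of $k$-element subsets of $[n]$, identified with increasing tuples, with Bruhat order $x\leqslant y$ iff $x_i\leqslant y_i$ for all $i\in[k]$. An interval is a set $\{z: x\leqslant z\leqslant y\}$. A linear extension of $X$ is a tuple $L=(L_1,\ldots,L_h)$ listing each element of $X$ exactly once such that $L_i<L_j$ implies $i<j$. For a tuple $C=(C_1,\ldots,C_h)$ of distinct elements of $[n]^k_<$: the dual graph $D(C)$ is the graph on $[h]$ with $\{i,j\}$ an edge iff $|C_i\cap C_j|=k-1$; the Hasse graph $H(C)$ is the graph on $[h]$ with $\{i,j\}$ an edge iff one of $C_i,C_j$ covers the other in the Bruhat order. For a graph $G$ on $[h]$, its track $T_G=\{v_1,\ldots,v_r\}$ is defined by $v_1=1$ and, for $i\geqslant2$, $v_i=\min\{j\in[h]: j>v_{i-1},\ \{v_{i-1},j\}\text{ an edge}\}$ if this exists, otherwise $r=i-1$. The promotion $\partial_G\in S_h$ is given by $\partial_G(i)=i-1$ for $i\notin T_G$, $\partial_G(v_j)=v_{j+1}-1$ for $j\in[r-1]$, $\partial_G(v_r)=h$. For $\sigma\in S_h$, $\sigma C:=(C_{\sigma^{-1}(1)},\ldots,C_{\sigma^{-1}(h)})$. Define $\partial_D C:=\partial_{D(C)}C$ and $\partial_H C:=\partial_{H(C)}C$.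 *)

(* Defs.v *)
From mathcomp Require Import all_boot.
Set Implicit Arguments. Unset Strict Implicit. Unset Printing Implicit Defensive.

(* Elements of [n]^k_< are represented as k-tuples of 'I_n (values 0..n-1,
   i.e. [n] shifted by -1) that are strictly increasing. *)
Section Defs.
Variables n k : nat.
Local Notation elt := (k.-tuple 'I_n).

Definition increasing (x : elt) : bool := sorted ltn (map val x).

Definition bruhat_le (x y : elt) : bool := [forall i : 'I_k, tnth x i <= tnth y i].
Definition bruhat_lt (x y : elt) : bool := bruhat_le x y && (x != y).

Definition bruhat_covers (y x : elt) : bool :=
  bruhat_lt x y &&
  ~~ [exists z : elt, [&& increasing z, bruhat_lt x z & bruhat_lt z y]].

Definition is_subposet (X : {set elt}) : Prop := forall x, x \in X -> increasing x.

Definition order_ideal (X : {set elt}) : Prop :=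
  is_subposet X /\
  forall x y, increasing x -> y \in X -> bruhat_le x y -> x \in X.

Definition interval (X : {set elt}) : Prop :=
  exists x y : elt, increasing x /\ increasing y /\
  X = [set z | [&& increasing z, bruhat_le x z & bruhat_le z y]].

(* L = (L_1,...,L_h) (stored 0-based in a seq) lists each element of X exactly
   once, and L_i < L_j implies i < j. *)
Definition linear_extension (X : {set elt}) (L : seq elt) : Prop :=
  uniq L /\ (forall x, (x \in L) = (x \in X)) /\
  forall i j x y, onth L i = Some x -> onth L j = Some y -> bruhat_lt x y -> i < j.

(* Graphs on [h] (1-based vertices) attached to a tuple C. *)
Definition dual_graph (C : seq elt) (i j : nat) : bool :=
  match onth C i.-1, onth C j.-1 with
  | Some a, Some b => (0 < i) && (0 < j) && (i != j) &&
                      (#|[set x in a] :&: [set x in b]| == k.-1)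
  | _, _ => false
  end.

Definition hasse_graph (C : seq elt) (i j : nat) : bool :=
  match onth C i.-1, onth C j.-1 with
  | Some a, Some b => (0 < i) && (0 < j) && (i != j) &&
                      (bruhat_covers a b || bruhat_covers b a)
  | _, _ => false
  end.
End Defs.

Definition track_next (G : nat -> nat -> bool) (h v : nat) : option nat :=
  ohead [seq j <- iota v.+1 (h - v) | G v j].

(* the track T_G = (v_1, ..., v_r), v_1 = 1; fuel h suffices since the
   v_i strictly increase inside [h] *)
Fixpoint track_from (G : nat -> nat -> bool) (h fuel v : nat) : seq nat :=
  v :: match fuel with
       | 0 => [::]
       | f.+1 => match track_next G h v with
                 | Some w => track_from G h f w
                 | None => [::]
                 end
       end.

Definition track (G : nat -> nat -> bool) (h : nat) : seq nat := track_from G h h 1.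

Definition promotion (G : nat -> nat -> bool) (h i : nat) : nat :=
  if i \in track G h then
    match track_next G h i with Some w => w.-1 | None => h end
  else i.-1.

(* sigma C := (C_{sigma^-1(1)}, ..., C_{sigma^-1(h)}) *)
Definition perm_act (T : Type) (sigma : nat -> nat) (C : seq T) : seq T :=
  pmap (fun p => onth C (find (fun i => sigma i.+1 == p) (iota 0 (size C))))
       (iota 1 (size C)).

Definition promD n k (C : seq (k.-tuple 'I_n)) :=
  perm_act (promotion (dual_graph C) (size C)) C.
Definition promH n k (C : seq (k.-tuple 'I_n)) :=
  perm_act (promotion (hasse_graph C) (size C)) C.

(* Main.v *)
Require Import Defs.
From mathcomp Require Import all_boot zify.
Set Implicit Arguments. Unset Strict Implicit.

Lemma cntA (s : seq nat) i : sorted ltn s -> i < size s ->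
  i < count (fun x => x <= nth 0 s i) s.
Proof.
elim: s i => [|x s IH] [|i] //=.
- by move=> _ _; rewrite leqnn.
- move=> Hp Hi.
  have Hs : sorted ltn s := path_sorted Hp.
  have := IH i Hs Hi.
  have Hm := order_path_min ltn_trans Hp.
  have Hx : x < nth 0 s i by move/allP: Hm; apply; exact: mem_nth.
  rewrite (ltnW Hx) /=; lia.
Qed.

Lemma cntB (s : seq nat) i t : sorted ltn s -> i < size s -> t <= nth 0 s i ->
  count (fun x => x < t) s <= i.
Proof.
elim: s i => [|x s IH] [|i] //=.
- move=> Hp _ Ht.
  have Hm := order_path_min ltn_trans Hp.
  rewrite ltnNge Ht /= add0n leqn0 eqn0Ngt -has_count; apply/hasPn => y Hy.
  move/allP: Hm => /(_ y Hy) Hxy; rewrite -leqNgt; exact: leq_trans Ht (ltnW Hxy).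
- move=> Hp Hi Ht.
  have := IH i (path_sorted Hp) Hi Ht. case: (x < t) => /=; lia.
Qed.

Section Aux.
Variables n k : nat.
Local Notation elt := (k.-tuple 'I_n).

Lemma le_refl (x : elt) : bruhat_le x x.
Proof. by apply/forallP. Qed.

Lemma le_trans (x y z : elt) : bruhat_le x y -> bruhat_le y z -> bruhat_le x z.
Proof.
move=> /forallP H1 /forallP H2; apply/forallP => i.
exact: leq_trans (H1 i) (H2 i).
Qed.

Lemma le_anti (x y : elt) : bruhat_le x y -> bruhat_le y x -> x = y.
Proof.
move=> /forallP H1 /forallP H2; apply: eq_from_tnth => i.
by apply: val_inj; apply/eqP; rewrite eqn_leq H1 H2.
Qed.

Lemma incrP (x : elt) : increasing x <->
  (forall i j : 'I_k, i < j -> nat_of_ord (tnth x i) < nat_of_ord (tnth x j)).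
Proof.
have E : forall i : 'I_k, nth 0 (map val x) i = nat_of_ord (tnth x i).
  move=> i; rewrite (nth_map (tnth x i)) ?size_tuple //.
  by rewrite -tnth_nth.
split.
- move=> Hs i j Hij; rewrite -!E.
  apply: (sorted_ltn_nth ltn_trans) => //; by rewrite inE size_map size_tuple.
- move=> H; apply/(sortedP 0) => i; rewrite size_map size_tuple => Hi.
  have Hi' : i < k by lia.
  have := H (Ordinal Hi') (Ordinal Hi); rewrite -!E /=; apply; by [].
Qed.

Lemma incr_uniq (x : elt) : increasing x -> uniq x.
Proof.
move=> H; have := @sorted_uniq _ ltn ltn_trans ltnn _ H.
by rewrite (map_inj_uniq val_inj).
Qed.

Lemma card_elt (x : elt) : increasing x -> #|[set y in x]| = k.
Proof.
move=> H; rewrite cardsE; move/card_uniqP: (incr_uniq H) => ->.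
by rewrite size_tuple.
Qed.


Lemma crit (a b : elt) : increasing a -> increasing b ->
  (forall t, count (fun x : 'I_n => val x < t) b <= count (fun x : 'I_n => val x < t) a) ->
  bruhat_le a b.
Proof.
move=> Ha Hb H; apply/forallP => i; rewrite leqNgt; apply/negP => Hlt.
have E : forall (x : elt) (i : 'I_k), nth 0 (map val x) i = nat_of_ord (tnth x i).
  move=> x j; rewrite (nth_map (tnth x j)) ?size_tuple //.
  by rewrite -tnth_nth.
have HA := cntA Hb (i := i); rewrite size_map size_tuple ltn_ord E in HA.
have HB := cntB Ha (i := i) (t := (nat_of_ord (tnth b i)).+1).
rewrite size_map size_tuple ltn_ord E in HB.
have := H (nat_of_ord (tnth b i)).+1; rewrite -!(count_map val (fun x => x < _)).
have := HB isT Hlt. have := HA isT.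
rewrite (eq_count (a2 := fun x => x < (nat_of_ord (tnth b i)).+1)) //.
lia.
Qed.

Lemma cnt_card (x : elt) (P : pred 'I_n) : increasing x ->
  count P x = #|[set y in x] :&: [set y | P y]|.
Proof.
move=> Hx; rewrite -size_filter.
have U : uniq (filter P x) by rewrite filter_uniq // incr_uniq.
move/card_uniqP: U => <-; apply: eq_card => y; rewrite !inE mem_filter andbC.
by [].
Qed.

Lemma card1I (p : 'I_n) (T : {set 'I_n}) : #|[set p] :&: T| = (p \in T).
Proof.
case: (boolP (p \in T)) => h.
- by rewrite (setIidPl _) ?cards1 // sub1set.
- apply/eqP; rewrite cards_eq0; apply/eqP/setP => y; rewrite !inE.
  by case: eqP => // ->; exact/negbTE.
Qed.

Lemma Lcnt (a b : elt) (p q : 'I_n) : increasing a -> increasing b ->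
  [set y in a] :\: [set y in b] = [set p] -> [set y in b] :\: [set y in a] = [set q] ->
  val p < val q -> bruhat_le a b.
Proof.
move=> Ha Hb Hp Hq Hpq; apply: crit => // t.
rewrite !cnt_card //.
set A := [set y in a]; set B := [set y in b]; set T := [set y : 'I_n | val y < t].
rewrite -(cardsID B (A :&: T)) -(cardsID A (B :&: T)).
have -> : A :&: T :&: B = B :&: T :&: A.
  by apply/setP => y; rewrite !inE; case: (y \in a); case: (y \in b); case: (val y < t).
have -> : A :&: T :\: B = [set p] :&: T.
  by rewrite -Hp; apply/setP => y; rewrite !inE; case: (y \in a); case: (y \in b).
have -> : B :&: T :\: A = [set q] :&: T.
  by rewrite -Hq; apply/setP => y; rewrite !inE; case: (y \in a); case: (y \in b).
rewrite !card1I leq_add2l /T !inE.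
case: (ltnP (val q) t) => //= Hqt. by rewrite (ltn_trans Hpq Hqt).
Qed.

Lemma L0 (a b : elt) : 0 < k -> increasing a -> increasing b ->
  #|[set y in a] :&: [set y in b]| = k.-1 -> bruhat_le a b || bruhat_le b a.
Proof.
move=> k0 Ha Hb H.
set A := [set y in a]; set B := [set y in b].
have cA : #|A| = k by apply: card_elt.
have cB : #|B| = k by apply: card_elt.
have dA : #|A :\: B| == 1.
  by have := cardsID B A; rewrite H cA => E; apply/eqP; lia.
have dB : #|B :\: A| == 1.
  by have := cardsID A B; rewrite setIC H cB => E; apply/eqP; lia.
case/cards1P: dA => p Hp; case/cards1P: dB => q Hq.
have pA : p \in A :\: B by rewrite Hp set11.
have qB : q \in B :\: A by rewrite Hq set11.
have npq : val p != val q.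
  apply/eqP => /val_inj epq; move: pA qB; rewrite !inE epq.
  by case: (q \in a); case: (q \in b).
case: (ltngtP (val p) (val q)) npq => // h _.
- by rewrite (Lcnt Ha Hb Hp Hq h).
- by rewrite (Lcnt Hb Ha Hq Hp h) orbT.
Qed.


Lemma incr_inj (a : elt) (j j' : 'I_k) : increasing a -> tnth a j = tnth a j' -> j = j'.
Proof.
move/incrP => Ha E; apply: val_inj; case: (ltngtP (val j) (val j')) => // h.
- by have := Ha _ _ h; rewrite E ltnn.
- by have := Ha _ _ h; rewrite E ltnn.
Qed.

Lemma L1 (a b : elt) : increasing a -> increasing b -> bruhat_lt a b ->
  exists z : elt, [/\ increasing z, #|[set y in a] :&: [set y in z]| = k.-1,
     bruhat_lt a z & bruhat_le z b].
Proof.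
move=> Ha Hb /andP[Hle Hne].
have Hle' := Hle; move/forallP: Hle' => Hle'.
have [i0 Hi0] : exists i, nat_of_ord (tnth a i) < nat_of_ord (tnth b i).
  case: (pickP (fun i => nat_of_ord (tnth a i) < nat_of_ord (tnth b i))) => [i Hi|H]; first by exists i.
  exfalso; move/negP: Hne; apply; apply/eqP; apply: eq_from_tnth => i; apply: val_inj.
  move/negbT: (H i); rewrite -leqNgt => h1; apply/eqP; rewrite eqn_leq h1 andbT.
  exact: Hle'.
case: (@arg_maxnP _ i0 (fun j => nat_of_ord (tnth a j) < nat_of_ord (tnth b j)) (fun j : 'I_k => val j) Hi0) => i Hi Hmax.
have Heq : forall j : 'I_k, i < j -> nat_of_ord (tnth a j) = nat_of_ord (tnth b j).
  move=> j hj; apply/eqP; rewrite eqn_leq Hle' /= leqNgt; apply/negP => h.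
  move: (Hmax j h); rewrite /geq /= leqNgt; by rewrite hj.
have Hn : (nat_of_ord (tnth a i)).+1 < n := leq_ltn_trans Hi (ltn_ord _).
pose zi := Ordinal Hn.
pose z := [tuple (if j == i then zi else tnth a j) | j < k].
have Ez : forall j, tnth z j = if j == i then zi else tnth a j.
  by move=> j; rewrite tnth_mktuple.
have Ha' := Ha; move/incrP: Ha' => Ha'.
have Hb' := Hb; move/incrP: Hb' => Hb'.
exists z; split.
- apply/incrP => j j' Hjj'; rewrite !Ez.
  case: (eqVneq j i) => [ej|hj]; case: (eqVneq j' i) => [ej'|hj'] /=.
  + by subst; rewrite ltnn in Hjj'.
  + subst j; have := Heq _ Hjj'; have := Hb' _ _ Hjj'.
    lia.
  + subst j'; have := Ha' _ _ Hjj'; lia.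
  + exact: Ha'.
- have -> : [set y in a] :&: [set y in z] = [set y in a] :\ tnth a i.
    apply/setP => y; rewrite !inE.
    apply/andP/andP => [[ya yz]|[ny ya]].
    + split => //; apply/eqP => ey; move/tnthP: yz => [j ej]; rewrite Ez in ej.
      case: (eqVneq j i) ej => [_ ->|hj ->] in ey *.
      * by move/(congr1 val): ey => /=; lia.
      * by move/(incr_inj Ha): ey => ey; rewrite ey eqxx in hj.
    + split => //; move/tnthP: ya => [j ej]; apply/tnthP; exists j; rewrite Ez.
      case: (eqVneq j i) => // ej'; by subst; rewrite eqxx in ny.
  have E := cardsD1 (tnth a i) [set y in a]; have cA := card_elt Ha.
  rewrite inE mem_tnth add1n in E; lia.
- apply/andP; split.
  + apply/forallP => j; rewrite Ez; case: eqP => [->|_] /=; [exact: leqnSn | exact: leqnn].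
  + apply/eqP => h; have := congr1 (fun t => nat_of_ord (tnth t i)) h.
    rewrite Ez eqxx /=; lia.
- apply/forallP => j; rewrite Ez; case: eqP => [->|_] /=; [lia | exact: Hle'].
Qed.

End Aux.

Lemma ohead_filter (P Q : pred nat) (s : seq nat) : sorted ltn s ->
  (forall j, j \in s -> Q j -> exists2 m, m \in s & (m <= j) && P m) ->
  (forall j, j \in s -> P j -> (forall m, m \in s -> m < j -> ~~ P m) -> Q j) ->
  ohead (filter P s) = ohead (filter Q s).
Proof.
elim: s => [|x s IH] //= Hs HA HB.
have Hm := order_path_min ltn_trans Hs.
have Hs' := path_sorted Hs.
case Px: (P x).
- have Qx : Q x.
    apply: HB => //; first exact: mem_head.
    move=> m; rewrite inE; case/orP => [/eqP ->|ms]; first by rewrite ltnn.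
    move/allP: Hm => /(_ m ms) h hm; have := ltn_trans h hm; by rewrite ltnn.
  by rewrite Qx.
- have Qx : Q x = false.
    apply/negbTE/negP => q; have [m ms /andP[mx pm]] := HA x (mem_head _ _) q.
    move: ms; rewrite inE; case/orP => [/eqP e|ms]; first by rewrite e Px in pm.
    move/allP: Hm => /(_ m ms) h; by rewrite leqNgt h in mx.
  rewrite Qx /=; apply: IH => //.
  + move=> j js q; have js' : j \in x :: s by rewrite inE js orbT.
    have [m ms /andP[mj pm]] := HA j js' q.
    move: ms; rewrite inE; case/orP => [/eqP e|ms]; first by rewrite e Px in pm.
    by exists m; rewrite ?mj.
  + move=> j js pj H; apply: HB => //; first by rewrite inE js orbT.
    move=> m; rewrite inE; case/orP => [/eqP ->|ms]; [by rewrite Px | exact: H].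
Qed.

Lemma track_from_eq (G1 G2 : nat -> nat -> bool) h :
  (forall v, track_next G1 h v = track_next G2 h v) ->
  forall f v, track_from G1 h f v = track_from G2 h f v.
Proof.
move=> E; elim => [|f IH] v //=; rewrite E.
by case: (track_next G2 h v) => // w; rewrite IH.
Qed.

Lemma X_incr n k (X : {set k.-tuple 'I_n}) : order_ideal X \/ interval X ->
  forall z, z \in X -> increasing z.
Proof.
case => [[H _]|[x [y [_ [_ ->]]]]] z; first exact: H.
by rewrite inE => /andP[].
Qed.

Lemma X_closed n k (X : {set k.-tuple 'I_n}) : order_ideal X \/ interval X ->
  forall a b z, a \in X -> b \in X -> increasing z -> bruhat_le a z -> bruhat_le z b ->
  z \in X.
Proof.
case => [[_ H]|[x [y [_ [_ ->]]]]] a b z aX bX zi az zb.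
- exact: H zi bX zb.
- move: aX bX; rewrite !inE zi => /and3P[_ xa _] /and3P[_ _ yb].
  by rewrite (le_trans xa az) (le_trans zb yb).
Qed.

Lemma dual_true n k (L : seq (k.-tuple 'I_n)) v m a z : 0 < v ->
  onth L v.-1 = Some a -> onth L m = Some z -> v.-1 < m ->
  #|[set y in a] :&: [set y in z]| = k.-1 -> dual_graph L v m.+1.
Proof.
move=> v0 Ev Em vm c; rewrite /dual_graph Ev /= Em v0 c eqxx /= andbT.
apply/eqP => e; rewrite e /= in vm; by rewrite ltnn in vm.
Qed.

Lemma lt_of_le_ne n k (x y : k.-tuple 'I_n) : bruhat_le x y -> x != y -> bruhat_lt x y.
Proof. by move=> h1 h2; apply/andP. Qed.

Lemma next_eq n k (X : {set k.-tuple 'I_n}) L : 0 < k -> (order_ideal X \/ interval X) ->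
  linear_extension X L -> forall v,
  track_next (dual_graph L) (size L) v = track_next (hasse_graph L) (size L) v.
Proof.
move=> k0 HX [Lu [Lmem Lord]] v; rewrite /track_next.
have inX : forall i x, onth L i = Some x -> x \in X.
  by move=> i x e; rewrite -Lmem; apply/onthP; exists i.
apply: ohead_filter; first exact: iota_ltn_sorted.
- move=> j js Q; rewrite mem_iota in js.
  move: Q; rewrite /hasse_graph.
  case Ev: (onth L v.-1) => [a|] //; case Ej: (onth L j.-1) => [b|] //.
  move=> /andP[/andP[/andP[v0 j0] vj] cov].
  move/andP: js => [js1 js2].
  have aX := inX _ _ Ev; have bX := inX _ _ Ej.
  case/orP: cov => /andP[lt _].
  + have := Lord _ _ _ _ Ej Ev lt; move: js1 v0; clear; lia.
  + have [z [zi zc az zb]] := L1 (X_incr HX aX) (X_incr HX bX) lt.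
    have zX : z \in X by apply: (X_closed HX aX bX) => //; case/andP: az.
    move: (zX); rewrite -Lmem => /onthP [m Em].
    have vm := Lord _ _ _ _ Ev Em az.
    have mj : m <= j.-1.
      case: (eqVneq z b) => [ezb|nzb].
      * subst z.
        have mL : m < size L by rewrite -onthTE Em.
        have e := @onth_inj _ L j.-1 m Lu (leq_ltn_trans (geq_minl m j.-1) mL) (etrans Ej (esym Em)).
        lia.
      * have := Lord _ _ _ _ Em Ej (lt_of_le_ne zb nzb); lia.
    exists m.+1; first by rewrite mem_iota; lia.
    rewrite (dual_true v0 Ev Em vm zc) andbT; lia.
- move=> j js P Hmin; have js0 := js; rewrite mem_iota in js.
  move: P; rewrite /dual_graph /hasse_graph.
  case Ev: (onth L v.-1) => [a|] //; case Ej: (onth L j.-1) => [b|] //.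
  move=> /andP[/andP[/andP[v0 j0] vj] /eqP c].
  rewrite v0 j0 vj /=.
  have aX := inX _ _ Ev; have bX := inX _ _ Ej.
  have ai := X_incr HX aX; have bi := X_incr HX bX.
  have nab : a != b.
    apply/eqP => e; subst b; move: c; rewrite setIid card_elt //; lia.
  case/orP: (L0 k0 ai bi c) => le.
  + apply/orP; right; apply/andP; split; first exact: lt_of_le_ne.
    apply/negP => /existsP [z /and3P[zi az zb]].
    have [z' [z'i z'c az' z'z]] := L1 ai zi az.
    have z'b : bruhat_le z' b by apply: le_trans z'z _; case/andP: zb.
    have z'X : z' \in X by apply: (X_closed HX aX bX) => //; case/andP: az'.
    move: (z'X); rewrite -Lmem => /onthP [m Em].
    have vm := Lord _ _ _ _ Ev Em az'.
    have nz'b : z' != b.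
      apply/eqP => e; subst z'; case/andP: zb => zb nzb.
      by rewrite (le_anti zb z'z) eqxx in nzb.
    have mj := Lord _ _ _ _ Em Ej (lt_of_le_ne z'b nz'b).
    have := Hmin m.+1; rewrite mem_iota (dual_true v0 Ev Em vm z'c).
    move=> H; have h1 : v < m.+1 < v.+1 + (size L - v).
      move/andP: js => [js1 js2]; apply/andP; split.
      * by move: vm v0; clear; lia.
      * by move: mj j0 js2; clear; lia.
    have h2 : m.+1 < j by move: mj j0; clear; lia.
    by move: (H h1 h2).
  + have nba : b != a by rewrite eq_sym.
    have := Lord _ _ _ _ Ej Ev (lt_of_le_ne le nba).
    move/andP: js => [js1 _]; move: js1 v0; clear; lia.
Qed.

Theorem corollary5p8 (n k : nat) (X : {set k.-tuple 'I_n}) (L : seq (k.-tuple 'I_n)) :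
  0 < k -> k <= n ->
  (order_ideal X \/ interval X) ->
  linear_extension X L ->
  promD L = promH L.
Proof.
move=> k0 _ HX HL.
have E := next_eq k0 HX HL.
have T := track_from_eq E.
rewrite /promD /promH /perm_act; apply: eq_pmap => p; congr onth.
apply: eq_find => i; rewrite /promotion /track T E.
by [].
Qed.
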